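(* Let $\mathcal N_1,\mathcal N_2,\mathcal N_3$ be nested graphs. If $\mu_1:\mathcal N_1\to\mathcal N_2$ and $\mu_2:\mathcal N_2\to\mathcal N_3$ are mergers, then $\mu_2\circ\mu_1$ is a merger. If $\kappa_1:\mathcal N_1\to\mathcal N_2$ and $\kappa_2:\mathcal N_2\to\mathcal N_3$ are contractions, then $\kappa_2\circ\kappa_1$ is a contraction.
   Context: A nested graph is a small category $\mathcal N$ for which there exists at least one functor $G:\mathcal N\to\underline n$ to a finite ordinal $\underline n$ (viewed as the category with a unique morphism $i\to j$ when $i\le j$ and none otherwise) sending every non-identity morphism to a non-identity morphism. Objects are called nodes. A flag is a non-identity morphism, said to be decorated by its domain. A flag is irreducible if it is not a composite of two flags. A vertex of a nested graph is a node that is not the domain of any flag; a corolla is a nested graph with exactly one vertex. A functor $\phi$ contracts a flag $f$ if $\phi(f)$ is an identity. A functor $\phi:\mathcal N_1\to\mathcal N_2$ between nested graphs is admissible if (1) for every irreducible flag $f$ of $\mathcal N_1$, $\phi(f)$ is an identity or an irreducible flag, and (2) for every irreducible flag $f:A\to B$ of $\mathcal N_1$ contracted by $\phi$, $\phi$ contracts every irreducible flag with domain $A$. An epi-functor $\phi:\mathcal N_1\to\mathcal N_2$ is a functor whose image generates all of $\mathcal N_2$ (every morphism of $\mathcal N_2$ is a composite of images of morphisms of $\mathcal N_1$). A merger is an admissible epi-functor $\mu:\mathcal N_1\to\mathcal N_2$ such that $\mathcal N_2$ is a quotient of $\mathcal N_1$ by an equivalence relation on the objects of $\mathcal N_1$.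 A contraction is an admissible epi-functor $\kappa:\mathcal N_1\to\mathcal N_2$ such that for every node $A_2$ of $\mathcal N_2$ the fiber $\kappa^{-1}(A_2)$ (the subcategory of $\mathcal N_1$ of objects mapped to $A_2$ and morphisms mapped to the identity of $A_2$) is a corolla. *)

(* Defs.v *)
From mathcomp Require Import all_boot.
Set Implicit Arguments. Unset Strict Implicit. Unset Printing Implicit Defensive.

Record Cat := {
  Obj :> Type;
  Hom : Obj -> Obj -> Type;
  idm : forall A, Hom A A;
  comp : forall A B C, Hom B C -> Hom A B -> Hom A C;
  comp_idl : forall A B (f : Hom A B), comp (idm B) f = f;
  comp_idr : forall A B (f : Hom A B), comp f (idm A) = f;
  comp_assoc : forall A B C D (h : Hom C D) (g : Hom B C) (f : Hom A B),
      comp h (comp g f) = comp (comp h g) f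
}.
Arguments Hom {c} _ _.
Arguments idm {c} A.
Arguments comp {c A B C} _ _.

Definition hcast (C : Cat) (a b a' b' : C) (ea : a = a') (eb : b = b')
  (f : Hom a b) : Hom a' b' :=
  eq_rect b (fun y => Hom a' y) (eq_rect a (fun x => Hom x b) f a' ea) b' eb.

Definition is_id (C : Cat) (A B : C) (f : Hom A B) : Prop :=
  exists e : A = B, eq_rect A (fun X => Hom X B) f B e = idm B.

Record Functor (C D : Cat) := {
  fobj :> C -> D;
  fmap : forall A B, Hom A B -> Hom (fobj A) (fobj B);
  fmap_id : forall A, fmap (idm A) = idm (fobj A);
  fmap_comp : forall A B E (g : Hom B E) (f : Hom A B),
      fmap (comp g f) = comp (fmap g) (fmap f)
}.
Arguments fmap {C D} _ {A B} _.

Definition fcomp (C D E : Cat) (G : Functor D E) (F : Functor C D) : Functor C E.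
Proof.
refine {| fobj := fun A => G (F A);
          fmap := fun A B f => fmap G (fmap F f) |}.
- by move=> A; rewrite !fmap_id.
- by move=> A B X g f; rewrite !fmap_comp.
Defined.

Definition functor_eq (C D : Cat) (F G : Functor C D) : Prop :=
  exists e : forall A, F A = G A,
    forall A B (f : Hom A B), hcast (e A) (e B) (fmap F f) = fmap G f.

Definition ordcat (n : nat) : Cat.
Proof.
refine {| Obj := 'I_n;
          Hom := fun i j => is_true (nat_of_ord i <= nat_of_ord j);
          idm := fun i => leqnn i;
          comp := fun i j k (g : j <= k) (f : i <= j) => leq_trans f g |}.
- by move=> *; apply: bool_irrelevance.
- by move=> *; apply: bool_irrelevance.
- by move=> *; apply: bool_irrelevance.
Defined.

Definition is_nested (C : Cat) : Prop :=
  exists (n : nat) (G : Functor C (ordcat n)),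
    forall A B (f : Hom A B), ~ is_id f -> ~ is_id (fmap G f).

Record NestedGraph := {
  ng_cat :> Cat;
  ng_nested : is_nested ng_cat
}.

Section Notions.
Variable C : Cat.

(** a flag is a non-identity morphism (decorated by its domain) *)
Definition flag (A B : C) (f : Hom A B) : Prop := ~ is_id f.

Definition irreducible (A B : C) (f : Hom A B) : Prop :=
  flag f /\ ~ exists (X : C) (g : Hom A X) (h : Hom X B),
      flag g /\ flag h /\ f = comp h g.

Definition vertex (A : C) : Prop := forall B (f : Hom A B), ~ flag f.

Definition corolla : Prop := exists v, vertex v /\ forall w, vertex w -> w = v.
End Notions.

Section Functors.
Variables C D : Cat.
Implicit Type phi : Functor C D.

Definition contracts phi (A B : C) (f : Hom A B) : Prop := is_id (fmap phi f).

Definition admissible phi : Prop :=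
  (forall A B (f : Hom A B), irreducible f ->
     is_id (fmap phi f) \/ irreducible (fmap phi f)) /\
  (forall A B (f : Hom A B), irreducible f -> contracts phi f ->
     forall B' (f' : Hom A B'), irreducible f' -> contracts phi f').

Inductive generated phi : forall X Y : D, Hom X Y -> Prop :=
| gen_img : forall A B (f : Hom A B), generated phi (fmap phi f)
| gen_id : forall X, generated phi (idm X)
| gen_comp : forall X Y Z (g : Hom Y Z) (f : Hom X Y),
    generated phi f -> generated phi g -> generated phi (comp g f).

Definition epi_functor phi : Prop :=
  forall X Y (g : Hom X Y), generated phi g.

Definition extends_along phi (E : Cat) (F : Functor C E) (G : Functor D E) : Prop :=
  functor_eq (fcomp G phi) F.

Definition is_quotient_by phi (R : C -> C -> Prop) : Prop :=
  (forall A, R A A) /\ (forall A B, R A B -> R B A) /\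
      (forall A B E, R A B -> R B E -> R A E) /\
      (forall A B, R A B <-> phi A = phi B) /\
      (forall X : D, exists A, phi A = X) /\
      (forall (E : Cat) (F : Functor C E),
         (forall A B, R A B -> F A = F B) ->
         (exists G, extends_along phi F G) /\
         (forall G1 G2, extends_along phi F G1 -> extends_along phi F G2 ->
            functor_eq G1 G2)).

Definition merger phi : Prop :=
  [/\ admissible phi, epi_functor phi & exists R, is_quotient_by phi R].

(** the fiber of phi over X (objects sent to X, morphisms sent to the
    identity of X) is a corolla: it has exactly one vertex *)
Definition fiber_vertex phi (X : D) (A : C) : Prop :=
  phi A = X /\ forall B (f : Hom A B), contracts phi f -> ~ flag f.

Definition fiber_is_corolla phi (X : D) : Prop :=
  exists v, fiber_vertex phi X v /\ forall w, fiber_vertex phi X w -> w = v.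

Definition contraction phi : Prop :=
  [/\ admissible phi, epi_functor phi & forall X : D, fiber_is_corolla phi X].
End Functors.

(* Main.v *)
From Stdlib Require Import Classical.
Require Import Defs.
From mathcomp Require Import all_boot.
From mathcomp Require Import zify.
Set Implicit Arguments. Unset Strict Implicit. Unset Printing Implicit Defensive.

Lemma is_id_idm (C : Cat) (A : C) : is_id (idm A).
Proof. by exists erefl. Qed.

Lemma is_id_fmap (C D : Cat) (F : Functor C D) (A B : C) (f : Hom A B) :
  is_id f -> is_id (fmap F f).
Proof.
case=> e; destruct e => /= ->; rewrite fmap_id; exact: is_id_idm.
Qed.

Lemma is_id_comp (C : Cat) (A B E : C) (f : Hom A B) (g : Hom B E) :
  is_id f -> is_id g -> is_id (Defs.comp g f).
Proof.
case=> e; destruct e => /= -> [e]; destruct e => /= ->.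
rewrite comp_idl; exact: is_id_idm.
Qed.

Lemma ord_is_id n (i j : 'I_n) (f : @Hom (ordcat n) i j) :
  nat_of_ord i = nat_of_ord j -> is_id f.
Proof.
move=> /val_inj e; subst j; exists erefl; exact: bool_irrelevance.
Qed.

Section Rank.
Variables (C : Cat) (n : nat) (G : Functor C (ordcat n)).
Hypothesis HG : forall A B (f : Hom A B), ~ is_id f -> ~ is_id (fmap G f).

Lemma rank_le (A B : C) (f : Hom A B) : nat_of_ord (G A) <= nat_of_ord (G B).
Proof. exact: (fmap G f). Qed.

Lemma rank_lt (A B : C) (f : Hom A B) : ~ is_id f ->
  nat_of_ord (G A) < nat_of_ord (G B).
Proof.
move=> nf; rewrite ltn_neqAle (rank_le f) andbT; apply/eqP => e.
by apply: (HG nf); apply: ord_is_id.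
Qed.

Lemma loop_id_G (P Q : C) (a : Hom P Q) (b : Hom Q P) : is_id a.
Proof.
apply: NNPP => na; have := leq_trans (rank_lt na) (rank_le b).
by rewrite ltnn.
Qed.

Lemma first_irr_G : forall (A B : C) (c : Hom A B), flag c ->
  exists Z (c1 : Hom A Z) (r : Hom Z B), irreducible c1 /\ c = Defs.comp r c1.
Proof.
suff H : forall d (A B : C) (c : Hom A B), nat_of_ord (G B) - nat_of_ord (G A) < d ->
  flag c -> exists Z (c1 : Hom A Z) (r : Hom Z B), irreducible c1 /\ c = Defs.comp r c1.
  by move=> A B c; apply: H (ltnSn _).
elim=> [//|d IH] A B c hd fc.
case: (classic (irreducible c)) => ic.
  by exists B, c, (idm B); rewrite comp_idl.
have [X [g [h [fg [fh e]]]]] : exists X (g : Hom A X) (h : Hom X B),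
    flag g /\ flag h /\ c = Defs.comp h g.
  by apply: NNPP => ne; apply: ic; split.
have l1 := rank_lt fg; have l2 := rank_lt fh.
have [Z [c1 [r [ir er]]]] := IH A X g ltac:(lia) fg.
exists Z, c1, (Defs.comp h r); split=> //.
by rewrite e er comp_assoc.
Qed.
End Rank.

Lemma loop_id (C : NestedGraph) (P Q : C) (a : Hom P Q) (b : Hom Q P) : is_id a.
Proof. case: (ng_nested C) => n [G HG]; exact: (loop_id_G HG a b). Qed.

Lemma comp_id_split (C : NestedGraph) (P Q R : C) (a : Hom P Q) (b : Hom Q R) :
  is_id (Defs.comp b a) -> is_id a /\ is_id b.
Proof.
case=> e _; subst R; split; [exact: loop_id a b | exact: loop_id b a].
Qed.

Lemma first_irr (C : NestedGraph) (A B : C) (c : Hom A B) : flag c ->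
  exists Z (c1 : Hom A Z) (r : Hom Z B), irreducible c1 /\ c = Defs.comp r c1.
Proof. case: (ng_nested C) => n [G HG]; exact: (first_irr_G HG). Qed.

Lemma adm_comp (C D E : Cat) (F : Functor C D) (H : Functor D E) :
  admissible F -> admissible H -> admissible (fcomp H F).
Proof.
case=> F1 F2 [H1 H2]; split.
- move=> A B f irr; case: (F1 _ _ f irr) => [idf|irf].
    by left; exact: (is_id_fmap H idf).
  case: (H1 _ _ _ irf) => [h|h]; [left|right]; exact: h.
- move=> A B f irr con B' f' irr'.
  case: (F1 _ _ f irr) => [idf|irf].
    exact: (is_id_fmap H (F2 _ _ f irr idf _ f' irr')).
  case: (F1 _ _ f' irr') => [idf'|irf']; first exact: (is_id_fmap H idf').
  exact: (H2 _ _ _ irf con _ _ irf').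
Qed.

Lemma gen_lift (C D E : Cat) (F : Functor C D) (H : Functor D E) X Y (g : Hom X Y) :
  generated F g -> generated (fcomp H F) (fmap H g).
Proof.
elim=> {X Y g}.
- move=> A B f; exact: (gen_img (fcomp H F) f).
- by move=> X; rewrite fmap_id; apply: gen_id.
- by move=> X Y Z g f _ IHf _ IHg; rewrite fmap_comp; apply: gen_comp.
Qed.

Lemma epi_comp (C D E : Cat) (F : Functor C D) (H : Functor D E) :
  epi_functor F -> epi_functor H -> epi_functor (fcomp H F).
Proof.
move=> eF eH X Y g; elim: (eH X Y g) => {X Y g}.
- by move=> A B f; apply: gen_lift.
- by move=> X; apply: gen_id.
- by move=> X Y Z g f _ IHf _ IHg; apply: gen_comp.
Qed.

Lemma hcast_trans (C : Cat) (a b a1 b1 a2 b2 : C) (e1 : a = a1) (e1' : b = b1)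
  (e2 : a1 = a2) (e2' : b1 = b2) (f : Hom a b) :
  hcast e2 e2' (hcast e1 e1' f) = hcast (etrans e1 e2) (etrans e1' e2') f.
Proof. by destruct e1, e1', e2, e2'. Qed.

Lemma hcast_sym (C : Cat) (a b a1 b1 : C) (e1 : a = a1) (e1' : b = b1) (f : Hom a b) :
  hcast (esym e1) (esym e1') (hcast e1 e1' f) = f.
Proof. by destruct e1, e1'. Qed.

Lemma feq_refl (C D : Cat) (F : Functor C D) : functor_eq F F.
Proof. by exists (fun A => erefl). Qed.

Lemma feq_sym (C D : Cat) (F G : Functor C D) : functor_eq F G -> functor_eq G F.
Proof.
case=> e E; exists (fun A => esym (e A)) => A B f.
by rewrite -(E A B f) hcast_sym.
Qed.

Lemma feq_trans (C D : Cat) (F G H : Functor C D) :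
  functor_eq F G -> functor_eq G H -> functor_eq F H.
Proof.
case=> e1 E1 [e2 E2]; exists (fun A => etrans (e1 A) (e2 A)) => A B f.
by rewrite -hcast_trans E1 E2.
Qed.

Lemma feq_whisk (C D E : Cat) (F : Functor C D) (H1 H2 : Functor D E) :
  functor_eq H1 H2 -> functor_eq (fcomp H1 F) (fcomp H2 F).
Proof. case=> e EE; exists (fun A => e (F A)) => A B f; exact: EE. Qed.

Lemma feq_assoc (C D E K : Cat) (F : Functor C D) (G : Functor D E) (H : Functor E K) :
  functor_eq (fcomp H (fcomp G F)) (fcomp (fcomp H G) F).
Proof. by exists (fun A => erefl). Qed.

Lemma quot_comp (C D E : Cat) (m1 : Functor C D) (m2 : Functor D E) R1 R2 :
  is_quotient_by m1 R1 -> is_quotient_by m2 R2 ->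
  is_quotient_by (fcomp m2 m1) (fun A B => m2 (m1 A) = m2 (m1 B)).
Proof.
case=> _ [_ [_ [i1 [s1 u1]]]] [_ [_ [_ [i2 [s2 u2]]]]].
split; first by [].
split; first by move=> A B ->.
split; first by move=> A B K -> ->.
split; first by [].
split.
  move=> X; have [Y eY] := s2 X; have [A eA] := s1 Y.
  by exists A; rewrite /= eA.
move=> K F hF.
have hF1 : forall A B, R1 A B -> F A = F B.
  by move=> A B /i1 e; apply: hF; rewrite e.
have [[G1 ext1] uq1] := u1 K F hF1.
have hG1 : forall X Y, R2 X Y -> G1 X = G1 Y.
  move=> X Y r; have [A eA] := s1 X; have [B eB] := s1 Y.
  subst X Y; case: ext1 => e1 _.
  have := e1 A; have := e1 B; rewrite /= => -> ->.
  by apply: hF; apply/i2.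
have [[G2 ext2] _] := u2 K G1 hG1.
split.
  exists G2; apply: feq_trans (feq_assoc _ _ _) _.
  exact: feq_trans (feq_whisk m1 ext2) ext1.
move=> H1 H2 x1 x2.
have hK : forall X Y, R2 X Y -> fcomp H1 m2 X = fcomp H1 m2 Y.
  by move=> X Y /i2 /= ->.
have [_ uq2] := u2 K (fcomp H1 m2) hK.
apply: uq2; first exact: feq_refl.
apply: feq_sym; apply: uq1.
- exact: feq_trans (feq_sym (feq_assoc _ _ _)) x1.
- exact: feq_trans (feq_sym (feq_assoc _ _ _)) x2.
Qed.

Lemma fiber_comp (N1 N2 N3 : NestedGraph) (k1 : Functor N1 N2) (k2 : Functor N2 N3) :
  contraction k1 -> contraction k2 -> forall X, fiber_is_corolla (fcomp k2 k1) X.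
Proof.
case=> [[_ A1] E1 C1] [_ _ C2] X.
case: (C2 X) => w2 [[ew2 hw2] uw2].
case: (C1 w2) => v [[ev hv] uv].
subst w2.
exists v; split.
  split; first by [].
  move=> B f cf fl; apply: (hv B f) _ fl.
  by apply: NNPP => nc; apply: (hw2 _ (fmap k1 f) cf).
move=> w [ew hw].
have hw1 : fiber_vertex k1 (k1 w) w.
  split=> // B f cf; exact: (hw B f (is_id_fmap k2 cf)).
have claim1 : forall A B (h : Hom A B), k1 A = k1 w -> flag (fmap k1 h) ->
    contracts k2 (fmap k1 h) -> False.
  case: (ng_nested N1) => n [G HG].
  suff H : forall d A B (h : Hom A B), nat_of_ord (G B) - nat_of_ord (G A) < d ->
    k1 A = k1 w -> flag (fmap k1 h) -> contracts k2 (fmap k1 h) -> False.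
    by move=> A B h; apply: H (ltnSn _).
  elim=> [//|d IH] A B h hd eA fl con.
  have hflag : flag h by move=> ih; apply: fl; apply: is_id_fmap.
  case: (classic (fiber_vertex k1 (k1 w) A)) => vA.
    case: (C1 (k1 w)) => u [_ uu].
    have eAw : A = w by rewrite (uu A vA) (uu w hw1).
    subst A; exact: (hw B h con hflag).
  have [B' [c [cc fc]]] : exists B' (c : Hom A B'), contracts k1 c /\ flag c.
    apply: NNPP => nex; apply: vA; split=> // B' c cc fc.
    by apply: nex; exists B', c.
  have [Z [c1 [r [ir er]]]] := first_irr fc.
  have cc1 : contracts k1 c1.
    by move: cc; rewrite /contracts er fmap_comp => /comp_id_split [].
  case: (classic (irreducible h)) => ih.
    by apply: fl; apply: (A1 _ _ c1 ir cc1 _ h ih).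
  have [Z' [h1 [h2 [f1 [f2 eh]]]]] : exists Z' (h1 : Hom A Z') (h2 : Hom Z' B),
      flag h1 /\ flag h2 /\ h = Defs.comp h2 h1.
    by apply: NNPP => ne; apply: ih; split.
  subst h.
  move: con; rewrite /contracts !fmap_comp => /comp_id_split [con1 con2].
  have l1 := rank_lt HG f1; have l2 := rank_lt HG f2.
  case: (classic (is_id (fmap k1 h1))) => [i1|n1].
    case: (i1) => e _.
    apply: (IH Z' B h2) => //; first by lia.
      by rewrite -e.
    move=> i2; apply: fl; rewrite fmap_comp; exact: is_id_comp.
  apply: (IH A Z' h1) => //; lia.
have claim2 : forall X Y (g : Hom X Y), generated k1 g -> X = k1 w -> flag g ->
    contracts k2 g -> False.
  move=> X' Y g; elim=> {X' Y g}.
  - move=> A B f eX fl con; exact: claim1 eX fl con.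
  - by move=> X' _ fl _; apply: fl; apply: is_id_idm.
  - move=> X' Y Z g f _ IHf _ IHg eX fl.
    rewrite /contracts fmap_comp => /comp_id_split [cf cg].
    case: (classic (is_id f)) => [i|nf]; last exact: IHf eX nf cf.
    case: (i) => e _; apply: IHg => //; first by rewrite -e.
    by move=> ig; apply: fl; apply: is_id_comp.
have fv2 : fiber_vertex k2 X (k1 w).
  split=> // Y g cg fg; exact: claim2 (E1 _ _ g) erefl fg cg.
have e2 : k1 w = k1 v by rewrite (uw2 _ fv2).
apply: uv; rewrite -e2; exact: hw1.
Qed.

Theorem mainTheorem2 (N1 N2 N3 : NestedGraph) :
  (forall (mu1 : Functor N1 N2) (mu2 : Functor N2 N3),
      merger mu1 -> merger mu2 -> merger (fcomp mu2 mu1)) /\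
  (forall (k1 : Functor N1 N2) (k2 : Functor N2 N3),
      contraction k1 -> contraction k2 -> contraction (fcomp k2 k1)).
Proof.
split.
  move=> mu1 mu2 [a1 e1 [R1 q1]] [a2 e2 [R2 q2]]; split.
  - exact: adm_comp.
  - exact: epi_comp.
  - eexists; exact: quot_comp q1 q2.
move=> k1 k2 c1 c2; split.
- by case: c1; case: c2 => *; apply: adm_comp.
- by case: c1; case: c2 => *; apply: epi_comp.
- exact: fiber_comp.
Qed.
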